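(* Define $\alpha\equiv\beta$ on $\mathrm{Form}$ by: $\vdash\alpha\to\beta$ and $\vdash\beta\to\alpha$ in the calculus $\mathcal{L}_\Delta$ below. Then (a) $\equiv$ is a congruence on $\mathrm{Form}$ regarded as an $\{\delta,\oplus,\neg,0\}$-algebra (with $\alpha\oplus\beta:=\neg\alpha\to\beta$ and $0:=\neg(\alpha_0\to\alpha_0)$ for a fixed formula $\alpha_0$); and (b) the quotient $\mathrm{Form}/{\equiv}$ is a $\delta$-algebra.
   Context: MV-algebras: algebras $(A,\oplus,\neg,0)$ of type $(2,1,0)$ with $(A,\oplus,0)$ a commutative monoid, $\neg\neg a=a$, $a\oplus\neg0=\neg0$, $\neg(\neg a\oplus b)\oplus b=\neg(\neg b\oplus a)\oplus a$; derived $1:=\neg0$, $a\odot b:=\neg(\neg a\oplus\neg b)$, $a\ominus b:=a\odot\neg b$, $a\vee b:=\neg(\neg a\oplus b)\oplus b$ (join of a lattice order $\le$), $d(a,b):=(a\ominus b)\oplus(b\ominus a)$. A $\delta$-algebra is an algebra $(A,\delta,\oplus,\neg,0)$ of type $(\omega,2,1,0)$ whose MV-reduct is an MV-algebra, satisfying, with $\tfrac12(x):=\delta(x,0,0,\dots)$: (i) $d(\delta(\vec x),\delta(x_1,0,0,\dots))=\delta(0,x_2,x_3,\dots)$; (ii) $\tfrac12(\delta(\vec x))=\delta(\tfrac12(x_1),\tfrac12(x_2),\dots)$; (iii) $\delta(x,x,\dots)=x$; (iv) $\delta(0,\vec x)=\tfrac12(\delta(\vec x))$; (v) $\delta(\vec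 x)\le\delta(x_1\oplus y_1,x_2\oplus y_2,\dots)$; (vi) $\tfrac12(x\ominus y)=\tfrac12(x)\ominus\tfrac12(y)$. Formulas: $\mathrm{Form}$ is the least set containing a fixed countably infinite set of propositional variables and closed under $\alpha\to\beta$, $\neg\alpha$, and $\delta(\langle\alpha_i\rangle)$ for every sequence $\langle\alpha_i\rangle=\alpha_1,\alpha_2,\dots$ indexed by $\omega$. Notation: $\langle\alpha\rangle$ is the constant sequence of value $\alpha$; $\alpha,\langle\beta_i\rangle$ is $\alpha,\beta_1,\beta_2,\dots$; $\langle\alpha_i\rangle_{i>1}$ is $\alpha_2,\alpha_3,\dots$; $\tfrac12\alpha:=\delta(\alpha,\langle\neg(\alpha\to\alpha)\rangle)$; a schema $\alpha\leftrightarrow\beta$ stands for the two schemas $\alpha\to\beta$ and $\beta\to\alpha$. The calculus $\mathcal{L}_\Delta$ has axiom schemata (for all formulas): (Ł1) $\alpha\to(\beta\to\alpha)$; (Ł2) $(\alpha\to\beta)\to((\beta\to\gamma)\to(\alpha\to\gamma))$; (Ł3) $((\alpha\to\beta)\to\beta)\to((\beta\to\alpha)\to\alpha)$; (Ł4) $(\neg\alpha\to\neg\beta)\to(\beta\to\alpha)$; (Δ1) $\neg(\delta(\langle\alpha_i\rangle)\to\tfrac12\alpha_1)\leftrightarrow\tfrac12\delta(\langle\alpha_i\rangle_{i>1})$; (Δ2) $\tfrac12\delta(\langle\alpha_i\rangle)\leftrightarrow\delta(\langle\tfrac12\alpha_i\rangle)$; (Δ3) $\delta(\langle\alpha\rangle)\leftrightarrow\alpha$;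 (Δ4) $\tfrac12\delta(\langle\alpha_i\rangle)\leftrightarrow\delta(\neg(\alpha\to\alpha),\langle\alpha_i\rangle)$; (Δ5) $\delta(\langle\alpha_i\rangle)\to\delta(\langle\neg\alpha_i\to\beta_i\rangle)$; (Δ6) $\tfrac12\neg(\alpha\to\beta)\leftrightarrow\neg(\tfrac12\alpha\to\tfrac12\beta)$; (Δ7) $\delta(\langle\alpha_i\to\beta_i\rangle)\to(\delta(\langle\alpha_i\rangle)\to\delta(\langle\beta_i\rangle))$. Rules: Modus Ponens (from $\alpha$ and $\alpha\to\beta$ infer $\beta$) and the $\delta$-rule (from $\alpha_i$ for all $i\in\omega$ infer $\delta(\langle\alpha_i\rangle)$). A proof of $\alpha$ from $\Theta\subseteq\mathrm{Form}$ is a sequence $(\alpha_i)_{i\in\eta+1}$ of formulas indexed by a successor ordinal $\eta+1$ with $\eta$ countable, such that $\alpha_\eta=\alpha$ and each member is an axiom, an element of $\Theta$, or obtained from earlier members by one of the rules. $\Theta^\vdash$ is the set of formulas provable from $\Theta$; $\vdash\alpha$ means $\alpha\in\emptyset^\vdash$. *)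

(* Defs.v *)
From Stdlib Require Import ClassicalEpsilon.

(** * Sequences indexed by omega (index 0 = first element alpha_1) *)
Definition scons {A : Type} (a : A) (s : nat -> A) : nat -> A :=
  fun i => match i with 0 => a | S j => s j end.
Definition stail {A : Type} (s : nat -> A) : nat -> A := fun i => s (S i).
Definition sconst {A : Type} (a : A) : nat -> A := fun _ => a.

Inductive Form : Type :=
| Fvar : nat -> Form
| Fimp : Form -> Form -> Form
| Fneg : Form -> Form
| Fdelta : (nat -> Form) -> Form.

Definition Fhalf (a : Form) : Form :=
  Fdelta (scons a (sconst (Fneg (Fimp a a)))).

Definition Foplus (a b : Form) : Form := Fimp (Fneg a) b.

Inductive LAxiom : Form -> Prop :=
| Ax_L1 : forall a b, LAxiom (Fimp a (Fimp b a))
| Ax_L2 : forall a b c,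
    LAxiom (Fimp (Fimp a b) (Fimp (Fimp b c) (Fimp a c)))
| Ax_L3 : forall a b,
    LAxiom (Fimp (Fimp (Fimp a b) b) (Fimp (Fimp b a) a))
| Ax_L4 : forall a b, LAxiom (Fimp (Fimp (Fneg a) (Fneg b)) (Fimp b a))
| Ax_D1a : forall s : nat -> Form,
    LAxiom (Fimp (Fneg (Fimp (Fdelta s) (Fhalf (s 0))))
                (Fhalf (Fdelta (stail s))))
| Ax_D1b : forall s : nat -> Form,
    LAxiom (Fimp (Fhalf (Fdelta (stail s)))
                (Fneg (Fimp (Fdelta s) (Fhalf (s 0)))))
| Ax_D2a : forall s : nat -> Form,
    LAxiom (Fimp (Fhalf (Fdelta s)) (Fdelta (fun i => Fhalf (s i))))
| Ax_D2b : forall s : nat -> Form,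
    LAxiom (Fimp (Fdelta (fun i => Fhalf (s i))) (Fhalf (Fdelta s)))
| Ax_D3a : forall a, LAxiom (Fimp (Fdelta (sconst a)) a)
| Ax_D3b : forall a, LAxiom (Fimp a (Fdelta (sconst a)))
| Ax_D4a : forall (a : Form) (s : nat -> Form),
    LAxiom (Fimp (Fhalf (Fdelta s)) (Fdelta (scons (Fneg (Fimp a a)) s)))
| Ax_D4b : forall (a : Form) (s : nat -> Form),
    LAxiom (Fimp (Fdelta (scons (Fneg (Fimp a a)) s)) (Fhalf (Fdelta s)))
| Ax_D5 : forall s t : nat -> Form,
    LAxiom (Fimp (Fdelta s) (Fdelta (fun i => Fimp (Fneg (s i)) (t i))))
| Ax_D6a : forall a b,
    LAxiom (Fimp (Fhalf (Fneg (Fimp a b))) (Fneg (Fimp (Fhalf a) (Fhalf b))))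
| Ax_D6b : forall a b,
    LAxiom (Fimp (Fneg (Fimp (Fhalf a) (Fhalf b))) (Fhalf (Fneg (Fimp a b))))
| Ax_D7 : forall s t : nat -> Form,
    LAxiom (Fimp (Fdelta (fun i => Fimp (s i) (t i)))
                (Fimp (Fdelta s) (Fdelta t))).

Inductive ProvFrom (Theta : Form -> Prop) : Form -> Prop :=
| PF_ax : forall a, LAxiom a -> ProvFrom Theta a
| PF_hyp : forall a, Theta a -> ProvFrom Theta a
| PF_mp : forall a b, ProvFrom Theta a -> ProvFrom Theta (Fimp a b) ->
    ProvFrom Theta b
| PF_delta : forall s : nat -> Form, (forall i, ProvFrom Theta (s i)) ->
    ProvFrom Theta (Fdelta s).

Definition Prov (a : Form) : Prop := ProvFrom (fun _ => False) a.

Definition FEquiv (a b : Form) : Prop := Prov (Fimp a b) /\ Prov (Fimp b a).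

(** Congruence on Form regarded as a {delta, (+), not, 0}-algebra
    (0 is a constant, so it imposes no compatibility condition). *)
Definition is_congruence (R : Form -> Form -> Prop) : Prop :=
  (forall a, R a a) /\
  (forall a b, R a b -> R b a) /\
  (forall a b c, R a b -> R b c -> R a c) /\
  (forall a a' b b', R a a' -> R b b' -> R (Foplus a b) (Foplus a' b')) /\
  (forall a a', R a a' -> R (Fneg a) (Fneg a')) /\
  (forall s s' : nat -> Form, (forall i, R (s i) (s' i)) ->
      R (Fdelta s) (Fdelta s')).

Section Alg.
Variables (A : Type) (oplus : A -> A -> A) (neg : A -> A) (zero : A).

Definition mv_one : A := neg zero.
Definition mv_odot (a b : A) : A := neg (oplus (neg a) (neg b)).
Definition mv_ominus (a b : A) : A := mv_odot a (neg b).
Definition mv_join (a b : A) : A := oplus (neg (oplus (neg a) b)) b.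
Definition mv_le (a b : A) : Prop := mv_join a b = b.
Definition mv_d (a b : A) : A := oplus (mv_ominus a b) (mv_ominus b a).

Definition is_MV : Prop :=
  (forall x y z, oplus x (oplus y z) = oplus (oplus x y) z) /\
  (forall x y, oplus x y = oplus y x) /\
  (forall x, oplus x zero = x) /\
  (forall x, neg (neg x) = x) /\
  (forall x, oplus x (neg zero) = neg zero) /\
  (forall x y, oplus (neg (oplus (neg x) y)) y = oplus (neg (oplus (neg y) x)) x).

Variable delta : (nat -> A) -> A.
Definition dl_half (x : A) : A := delta (scons x (sconst zero)).

Definition is_delta_algebra : Prop :=
  is_MV /\
  (forall x : nat -> A,
      mv_d (delta x) (delta (scons (x 0) (sconst zero)))
      = delta (scons zero (stail x))) /\
  (forall x : nat -> A, dl_half (delta x) = delta (fun i => dl_half (x i))) /\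
  (forall x : A, delta (sconst x) = x) /\
  (forall x : nat -> A, delta (scons zero x) = dl_half (delta x)) /\
  (forall x y : nat -> A, mv_le (delta x) (delta (fun i => oplus (x i) (y i)))) /\
  (forall x y : A, dl_half (mv_ominus x y) = mv_ominus (dl_half x) (dl_half y)).
End Alg.

(** * The quotient Form / == (equivalence classes as predicates) *)
Definition FormQ : Type := { P : Form -> Prop | exists a, P = FEquiv a }.

Definition qcls (a : Form) : FormQ :=
  exist (fun P => exists a, P = FEquiv a) (FEquiv a) (ex_intro _ a eq_refl).

Definition qrep (q : FormQ) : Form :=
  proj1_sig (constructive_indefinite_description _ (proj2_sig q)).

Definition qneg (q : FormQ) : FormQ := qcls (Fneg (qrep q)).
Definition qoplus (p q : FormQ) : FormQ := qcls (Foplus (qrep p) (qrep q)).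
Definition qdelta (s : nat -> FormQ) : FormQ := qcls (Fdelta (fun i => qrep (s i))).
Definition qzero (a0 : Form) : FormQ := qcls (Fneg (Fimp a0 a0)).

(* Main.v *)
Require Import Defs.
From Stdlib Require Import FunctionalExtensionality PropExtensionality ProofIrrelevance ClassicalEpsilon.

Definition P := Prov.
Lemma ax a : LAxiom a -> Prov a. Proof. intro; apply PF_ax; auto. Qed.
Lemma mp a b : Prov a -> Prov (Fimp a b) -> Prov b. Proof. apply PF_mp. Qed.

Definition tt := Fimp (Fvar 0) (Fimp (Fvar 0) (Fvar 0)).
Lemma prov_tt : Prov tt. Proof. apply ax; constructor. Qed.

Lemma l1r a b : Prov a -> Prov (Fimp b a).
Proof. intro H; eapply mp; [exact H| apply ax; constructor]. Qed.
Lemma syl a b c : Prov (Fimp a b) -> Prov (Fimp b c) -> Prov (Fimp a c).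
Proof. intros H1 H2. eapply mp; [exact H2|]. eapply mp; [exact H1|]. apply ax; constructor. Qed.
Lemma telim t x : Prov t -> Prov (Fimp (Fimp t x) x).
Proof. intro H. eapply mp; [apply (l1r t (Fimp x t) H)|]. apply ax; constructor. Qed.
Lemma prefl a : Prov (Fimp a a).
Proof. eapply syl; [apply ax; apply (Ax_L1 a tt)| apply telim, prov_tt]. Qed.
Lemma ante a a' b : Prov (Fimp a' a) -> Prov (Fimp (Fimp a b) (Fimp a' b)).
Proof. intro H; eapply mp; [exact H| apply ax; constructor]. Qed.
Lemma y_le y z : Prov (Fimp y (Fimp (Fimp y z) z)).
Proof. eapply syl; [apply ax; apply (Ax_L1 y (Fimp z y))| apply ax; constructor]. Qed.
Lemma exch_ax x y z : Prov (Fimp (Fimp x (Fimp y z)) (Fimp y (Fimp x z))).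
Proof.
  eapply syl; [apply ax; apply (Ax_L2 x (Fimp y z) z)|].
  apply ante, y_le.
Qed.
Lemma exch x y z : Prov (Fimp x (Fimp y z)) -> Prov (Fimp y (Fimp x z)).
Proof. intro H; eapply mp; [exact H| apply exch_ax]. Qed.
Lemma cons a b b' : Prov (Fimp b b') -> Prov (Fimp (Fimp a b) (Fimp a b')).
Proof. intro H; eapply mp; [exact H|]. apply exch. apply ax; constructor. Qed.
Lemma dn1 x : Prov (Fimp (Fneg (Fneg x)) x).
Proof.
  eapply syl; [apply ax; apply (Ax_L1 (Fneg (Fneg x)) (Fneg (Fneg tt)))|].
  eapply syl; [apply ax; apply (Ax_L4 (Fneg tt) (Fneg x))|].
  eapply syl; [apply ax; apply (Ax_L4 x tt)|].
  apply telim, prov_tt.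
Qed.
Lemma dn2 x : Prov (Fimp x (Fneg (Fneg x))).
Proof. eapply mp; [apply (dn1 (Fneg x))| apply ax; apply (Ax_L4 (Fneg (Fneg x)) x)]. Qed.
Lemma contra a b : Prov (Fimp a b) -> Prov (Fimp (Fneg b) (Fneg a)).
Proof.
  intro H. eapply mp; [| apply ax; apply (Ax_L4 (Fneg a) (Fneg b))].
  eapply syl; [apply dn1|]. eapply syl; [exact H| apply dn2].
Qed.
Lemma contra_ax a b : Prov (Fimp (Fimp a b) (Fimp (Fneg b) (Fneg a))).
Proof.
  eapply syl; [apply ante, (dn1 a)|].
  eapply syl; [apply cons, (dn2 b)|].
  apply ax; apply (Ax_L4 (Fneg a) (Fneg b)).
Qed.
Lemma zero_imp c y : Prov (Fimp (Fneg (Fimp c c)) y).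
Proof. eapply syl; [apply contra, l1r, prefl| apply dn1]. Qed.

Lemma e_refl a : FEquiv a a. Proof. split; apply prefl. Qed.
Lemma e_sym a b : FEquiv a b -> FEquiv b a. Proof. intros [? ?]; split; auto. Qed.
Lemma e_trans a b c : FEquiv a b -> FEquiv b c -> FEquiv a c.
Proof. intros [? ?] [? ?]; split; eapply syl; eauto. Qed.
Lemma imp_cong a a' b b' : FEquiv a a' -> FEquiv b b' -> FEquiv (Fimp a b) (Fimp a' b').
Proof.
  intros [? ?] [? ?]; split; (eapply syl; [apply ante; eauto| apply cons; eauto]).
Qed.
Lemma neg_cong a a' : FEquiv a a' -> FEquiv (Fneg a) (Fneg a').
Proof. intros [? ?]; split; apply contra; auto. Qed.
Lemma oplus_cong a a' b b' : FEquiv a a' -> FEquiv b b' -> FEquiv (Foplus a b) (Foplus a' b').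
Proof. intros; apply imp_cong; auto; apply neg_cong; auto. Qed.
Lemma delta_mono s t : (forall i, Prov (Fimp (s i) (t i))) -> Prov (Fimp (Fdelta s) (Fdelta t)).
Proof. intro H; eapply mp; [apply PF_delta; exact H| apply ax; constructor]. Qed.
Lemma delta_cong s t : (forall i, FEquiv (s i) (t i)) -> FEquiv (Fdelta s) (Fdelta t).
Proof. intro H; split; apply delta_mono; intro i; apply H. Qed.
Lemma ax_eqv a b : LAxiom (Fimp a b) -> LAxiom (Fimp b a) -> FEquiv a b.
Proof. intros; split; apply ax; auto. Qed.
Lemma prov_eqv a b : Prov a -> Prov b -> FEquiv a b.
Proof. intros; split; apply l1r; auto. Qed.
Lemma true_imp t x : Prov t -> FEquiv (Fimp t x) x.
Proof. intro; split; [apply telim; auto| apply ax; constructor]. Qed.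
Lemma dneg x : FEquiv (Fneg (Fneg x)) x. Proof. split; [apply dn1|apply dn2]. Qed.
Lemma contrap a b : FEquiv (Fimp a b) (Fimp (Fneg b) (Fneg a)).
Proof. split; [apply contra_ax| apply ax; apply (Ax_L4 b a)]. Qed.
Lemma exch_eqv x y z : FEquiv (Fimp x (Fimp y z)) (Fimp y (Fimp x z)).
Proof. split; apply exch_ax. Qed.
Lemma imp_true_neg A p : Prov p -> FEquiv (Fimp A (Fneg p)) (Fneg A).
Proof.
  intro Hp. eapply e_trans; [apply contrap|].
  eapply e_trans; [apply imp_cong; [apply dneg| apply e_refl]|].
  apply true_imp; auto.
Qed.
Lemma zeq a b : FEquiv (Fneg (Fimp a a)) (Fneg (Fimp b b)).
Proof. apply neg_cong, prov_eqv; apply prefl. Qed.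
Lemma half_cong a a' c : FEquiv a a' ->
  FEquiv (Fdelta (scons a (sconst (Fneg (Fimp c c))))) (Fhalf a').
Proof. intro H; apply delta_cong; intros [|i]; simpl; [exact H| apply zeq]. Qed.
Lemma comm_eqv x y : FEquiv (Foplus x y) (Foplus y x).
Proof.
  unfold Foplus. eapply e_trans; [apply contrap|].
  apply imp_cong; [apply e_refl| apply dneg].
Qed.
Lemma assoc_eqv a b c : FEquiv (Foplus a (Foplus b c)) (Foplus (Foplus a b) c).
Proof.
  apply e_sym. unfold Foplus.
  eapply e_trans; [apply contrap|].
  eapply e_trans; [apply imp_cong; [apply e_refl| apply dneg]|].
  eapply e_trans; [apply exch_eqv|].
  apply imp_cong; [apply e_refl|]. apply (comm_eqv c b).
Qed.
Lemma ominus_eq a b :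
  FEquiv (Fneg (Foplus (Fneg a) (Fneg (Fneg b)))) (Fneg (Fimp a b)).
Proof. apply neg_cong; unfold Foplus; apply imp_cong; apply dneg. Qed.
Lemma join_eq a b : Prov (Fimp a b) ->
  FEquiv (Foplus (Fneg (Foplus (Fneg a) b)) b) b.
Proof.
  intro H. unfold Foplus. apply true_imp.
  eapply mp; [| apply dn2]. eapply syl; [apply dn1| exact H].
Qed.

Lemma sig_eq (x y : FormQ) : proj1_sig x = proj1_sig y -> x = y.
Proof. destruct x as [x hx], y as [y hy]; simpl; intro; subst; f_equal; apply proof_irrelevance. Qed.
Lemma qeq a b : FEquiv a b -> qcls a = qcls b.
Proof.
  intro H. apply sig_eq; simpl. apply functional_extensionality; intro c.
  apply propositional_extensionality; split; intro; eapply e_trans; eauto; apply e_sym; auto.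
Qed.
Lemma qsurj q : q = qcls (qrep q).
Proof.
  apply sig_eq; simpl. unfold qrep.
  destruct (constructive_indefinite_description _ _) as [a Ha]; simpl; exact Ha.
Qed.
Lemma qsurj' q : exists a, q = qcls a.
Proof. eexists; apply qsurj. Qed.
Lemma qrep_cls a : FEquiv (qrep (qcls a)) a.
Proof.
  pose proof (f_equal (@proj1_sig _ _) (qsurj (qcls a))) as H; simpl in H.
  pose proof (e_refl a) as Ha. rewrite H in Ha. exact Ha.
Qed.
Lemma qneg_cls a : qneg (qcls a) = qcls (Fneg a).
Proof. unfold qneg; apply qeq, neg_cong, qrep_cls. Qed.
Lemma qoplus_cls a b : qoplus (qcls a) (qcls b) = qcls (Foplus a b).
Proof. unfold qoplus; apply qeq, oplus_cong; apply qrep_cls. Qed.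
Lemma qdelta_cls x s : (forall i, x i = qcls (s i)) -> qdelta x = qcls (Fdelta s).
Proof. intro H; unfold qdelta; apply qeq, delta_cong; intro i; rewrite H; apply qrep_cls. Qed.
Lemma qhalf_cls a0 a : qdelta (scons (qcls a) (sconst (qzero a0)))
   = qcls (Fdelta (scons a (sconst (Fneg (Fimp a0 a0))))).
Proof. apply qdelta_cls; intros [|i]; reflexivity. Qed.

Ltac qsimp := repeat (first [rewrite qneg_cls | rewrite qoplus_cls]).

Theorem mainTheorem11 (a0 : Form) :
  is_congruence FEquiv /\
  is_delta_algebra FormQ qoplus qneg (qzero a0) qdelta.
Proof.
  set (Zf := Fneg (Fimp a0 a0)).
  assert (HZ : qzero a0 = qcls Zf) by reflexivity.
  split.
  { split; [exact e_refl|]. split; [exact e_sym|]. split; [exact e_trans|].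
    split; [exact oplus_cong|]. split; [exact neg_cong|]. exact delta_cong. }
  split.
  {
    unfold is_MV. split; [|split; [|split; [|split; [|split]]]].
    - intros x y z. destruct (qsurj' x) as [a ->], (qsurj' y) as [b ->], (qsurj' z) as [c ->].
      qsimp. apply qeq, assoc_eqv.
    - intros x y. destruct (qsurj' x) as [a ->], (qsurj' y) as [b ->].
      qsimp. apply qeq, comm_eqv.
    - intros x. destruct (qsurj' x) as [a ->]. rewrite HZ. qsimp. apply qeq.
      unfold Foplus, Zf. eapply e_trans; [apply e_sym, contrap|]. apply true_imp, prefl.
    - intros x. destruct (qsurj' x) as [a ->]. qsimp. apply qeq, dneg.
    - intros x. destruct (qsurj' x) as [a ->]. rewrite HZ. qsimp. apply qeq.
      assert (Prov (Fneg Zf)) by (eapply mp; [apply prefl| apply dn2]).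
      apply prov_eqv; auto. apply l1r; auto.
    - intros x y. destruct (qsurj' x) as [a ->], (qsurj' y) as [b ->]. qsimp. apply qeq.
      assert (forall a b, FEquiv (Foplus (Fneg (Foplus (Fneg a) b)) b) (Fimp (Fimp a b) b)) as K.
      { intros u v. unfold Foplus. apply imp_cong; [| apply e_refl].
        eapply e_trans; [apply dneg|]. apply imp_cong; [apply dneg| apply e_refl]. }
      eapply e_trans; [apply K|]. eapply e_trans; [| apply e_sym, K].
      apply ax_eqv; constructor. }
  split.
  {
    intro x. set (s := fun i => qrep (x i)).
    assert (hx : forall i, x i = qcls (s i)) by (intro; apply qsurj).
    rewrite (qdelta_cls x s hx).
    rewrite (qdelta_cls _ (scons (s 0) (sconst Zf))) by (intros [|i]; simpl; [apply hx| reflexivity]).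
    rewrite (qdelta_cls _ (scons Zf (stail s))) by (intros [|i]; simpl; [reflexivity| apply hx]).
    unfold mv_d, mv_ominus, mv_odot. qsimp. apply qeq.
    set (D := Fdelta s). set (H := Fdelta (scons (s 0) (sconst Zf))).
    assert (HD : Prov (Fimp H D)).
    { apply delta_mono. intros [|i]; simpl; [apply prefl| apply zero_imp]. }
    eapply e_trans; [unfold Foplus at 1; apply imp_cong; [apply neg_cong, ominus_eq| apply ominus_eq]|].
    eapply e_trans; [apply imp_cong; [apply dneg| apply e_refl]|].
    eapply e_trans; [apply imp_true_neg; exact HD|].
    eapply e_trans; [apply neg_cong, imp_cong; [apply e_refl| apply half_cong, e_refl]|].
    eapply e_trans; [apply ax_eqv; [apply Ax_D1a| apply Ax_D1b]|].
    apply ax_eqv; [apply Ax_D4a| apply Ax_D4b]. }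
  split.
  {
    intro x. set (s := fun i => qrep (x i)).
    assert (hx : forall i, x i = qcls (s i)) by (intro; apply qsurj).
    unfold dl_half. rewrite (qdelta_cls x s hx), qhalf_cls.
    rewrite (qdelta_cls _ (fun i => Fdelta (scons (s i) (sconst Zf)))).
    2:{ intro i. apply qdelta_cls. intros [|j]; simpl; [apply hx| reflexivity]. }
    apply qeq.
    eapply e_trans; [apply half_cong, e_refl|].
    eapply e_trans; [apply ax_eqv; [apply Ax_D2a| apply Ax_D2b]|].
    apply delta_cong; intro i. apply e_sym, half_cong, e_refl. }
  split.
  {
    intro x. destruct (qsurj' x) as [a ->].
    rewrite (qdelta_cls _ (sconst a)) by reflexivity.
    apply qeq, ax_eqv; constructor. }
  split.
  {
    intro x. set (s := fun i => qrep (x i)).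
    assert (hx : forall i, x i = qcls (s i)) by (intro; apply qsurj).
    unfold dl_half. rewrite (qdelta_cls x s hx), qhalf_cls.
    rewrite (qdelta_cls _ (scons Zf s)) by (intros [|i]; simpl; [reflexivity| apply hx]).
    apply qeq. eapply e_trans; [| apply e_sym, half_cong, e_refl].
    apply ax_eqv; [apply Ax_D4b| apply Ax_D4a]. }
  split.
  {
    intros x y. set (s := fun i => qrep (x i)). set (t := fun i => qrep (y i)).
    assert (hx : forall i, x i = qcls (s i)) by (intro; apply qsurj).
    assert (hy : forall i, y i = qcls (t i)) by (intro; apply qsurj).
    unfold mv_le, mv_join. rewrite (qdelta_cls x s hx).
    rewrite (qdelta_cls _ (fun i => Foplus (s i) (t i))).
    2:{ intro i. rewrite hx, hy. apply qoplus_cls. }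
    qsimp. apply qeq, join_eq. apply ax; constructor. }
  {
    intros x y. destruct (qsurj' x) as [a ->], (qsurj' y) as [b ->].
    unfold mv_ominus, mv_odot, dl_half.
    repeat (first [rewrite qneg_cls | rewrite qoplus_cls | rewrite qhalf_cls]).
    apply qeq.
    eapply e_trans; [apply half_cong, ominus_eq|].
    eapply e_trans; [apply ax_eqv; [apply Ax_D6a| apply Ax_D6b]|].
    apply e_sym. eapply e_trans; [apply ominus_eq|].
    apply neg_cong, imp_cong; apply half_cong, e_refl. }
Qed.
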